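(* Let $n\ge 2$ and $v\in A_n$. Then $1$ and $2$ lie in the same cycle of $v$ if and only if $\ell_{T(A_n)}(v)$ is odd.
   Context: $A_n$ is the alternating group on $\{1,\dots,n\}$, $T(A_n)=\{(1\,2)(i\,j)\mid 1\le i<j\le n\}$, and $\ell_{T(A_n)}(v)=\min\{k\ge 0\mid v=t_1\cdots t_k,\ t_i\in T(A_n)\}$. Cycles refer to the disjoint cycle decomposition of $v$ (fixed points are cycles of length 1). *)

(* Defs.v *)
From mathcomp Require Import all_boot all_order all_fingroup all_solvable.
Set Implicit Arguments. Unset Strict Implicit. Unset Printing Implicit Defensive.
Local Open Scope group_scope.

(* Points 1,...,n of the paper are the ordinals 0,...,n-1 of 'I_n:
   paper point k corresponds to the ordinal with value k-1.  *)

(* Paper-style composition of permutations as functions: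
   (s \o t)(x) = s (t x).  In MathComp, (s * t) x = t (s x), so
   s \o t = t * s. *)
Definition pcomp (n : nat) (s t : {perm 'I_n}) : {perm 'I_n} := t * s.

Definition TAn (n : nat) : {set {perm 'I_n}} :=
  [set g | [exists a : 'I_n, exists b : 'I_n, exists i : 'I_n, exists j : 'I_n,
     [&& val a == 0%N, val b == 1%N, (i < j)%N & g == pcomp (tperm a b) (tperm i j)]]].

Definition word_prod (n : nat) (w : seq {perm 'I_n}) : {perm 'I_n} :=
  foldr (@pcomp n) 1 w.

Definition T_word_of_length (n : nat) (v : {perm 'I_n}) (k : nat) : Prop :=
  exists w : seq {perm 'I_n},
    [/\ size w = k, all (fun t => t \in TAn n) w & word_prod w = v].

Definition T_length_is (n : nat) (v : {perm 'I_n}) (k : nat) : Prop :=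
  T_word_of_length v k /\ forall m, T_word_of_length v m -> (k <= m)%N.

(* Main.v *)
Require Import Defs.
From mathcomp Require Import all_boot all_order all_fingroup all_solvable.
From mathcomp Require Import zify.
Set Implicit Arguments. Unset Strict Implicit. Unset Printing Implicit Defensive.
Local Open Scope group_scope.

Section S.
Variable n : nat.
Implicit Types u x y : {perm 'I_n}.

Definition cc u := #|porbits u|.

Lemma cc1 : cc 1 = n.
Proof.
rewrite /cc /porbits card_imset ?card_ord // => x y; move/eqP; rewrite eq_porbit_mem.
by rewrite porbit.unlock cycle1 imset_set1 /aperm perm1 inE=> /eqP.
Qed.

Lemma ccV u : cc u^-1 = cc u.
Proof. by rewrite /cc porbitsV. Qed.

Lemma cc_le u : (cc u <= n)%N.
Proof. by rewrite /cc /porbits; apply: leq_trans (leq_imset_card _ _) _; rewrite card_ord. Qed.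

Lemma cc_tl_in a b u : a != b -> a \in porbit u b -> cc (tperm a b * u) = (cc u).+1.
Proof.
move=> ab ain; have := porbits_mul_tperm u a b; rewrite /= ain ab /cc /=.
move=> h; lia.
Qed.

Lemma cc_tl_out a b u : a != b -> a \notin porbit u b -> (cc (tperm a b * u)).+1 = cc u.
Proof.
move=> ab ain; have := porbits_mul_tperm u a b; rewrite /= ain ab /cc /=.
move=> h; lia.
Qed.

Lemma cc_tl_ge a b u : (cc u <= (cc (tperm a b * u)).+1)%N.
Proof.
have [->|ab] := eqVneq a b; first by rewrite tperm1 mul1g.
case: (boolP (a \in porbit u b)) => h.
  by rewrite cc_tl_in // leqW // leqW.
by rewrite -(cc_tl_out ab h).
Qed.

Lemma cc_r u a b : cc (u * tperm a b) = cc (tperm a b * u^-1).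
Proof. by rewrite -ccV invMg tpermV. Qed.

Lemma cc_tr_ge a b u : (cc u <= (cc (u * tperm a b)).+1)%N.
Proof. by rewrite cc_r -(ccV u); apply: cc_tl_ge. Qed.

Inductive trp : nat -> {perm 'I_n} -> Prop :=
| trp0 : trp 0 1
| trpS m y a b : a != b -> trp m y -> trp m.+1 (y * tperm a b).

Lemma trp_exists m : forall x, (n - cc x)%N = m -> trp m x.
Proof.
elim: m => [|m IH] x hm.
  have hc : cc x = n by have := cc_le x; lia.
  suff -> : x = 1 by constructor.
  apply/permP => a; rewrite perm1; apply/eqP/negPn/negP => xa.
  have := cc_tl_in (u := x) (a := a) (b := x a).
  rewrite eq_sym xa => /(_ isT).
  rewrite porbit_sym -(expg1 x) mem_porbit => /(_ isT).
  by have := cc_le (tperm a ((x ^+ 1) a) * x); rewrite expg1 hc => ?; lia.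
have [x1|] := eqVneq x 1; first by move: hm; rewrite x1 cc1 subnn.
move=> x1; case: (pickP (fun a => x a != a)) => [a xa | hall]; last first.
  by case/eqP: x1; apply/permP => a; rewrite perm1; apply/eqP/idPn; rewrite hall.
have ab : a != x a by rewrite eq_sym.
have hin : a \in porbit x^-1 (x a).
  by rewrite porbitV porbit_sym -(expg1 x) mem_porbit.
have h1 : cc (x * tperm a (x a)) = (cc x).+1 by rewrite cc_r cc_tl_in // ccV.
have -> : x = (x * tperm a (x a)) * tperm a (x a) by rewrite -mulgA tperm2 mulg1.
constructor => //; apply: IH; lia.
Qed.

Variables (one two : 'I_n).
Hypothesis (h1 : val one = 0%N) (h2 : val two = 1%N).
Let tau := tperm one two.

Lemma one_two : one != two.
Proof. by apply/eqP => e; move: h1 h2; rewrite e => ->. Qed.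

Lemma TAn_inv t : t \in TAn n -> exists a b, a != b /\ t = tperm a b * tau.
Proof.
rewrite inE => /existsP [a /existsP [b /existsP [i /existsP [j /and4P [ha hb hij /eqP ->]]]]].
have -> : a = one by apply: val_inj; rewrite h1; apply/eqP.
have -> : b = two by apply: val_inj; rewrite h2; apply/eqP.
exists i, j; split => //; apply/eqP => e; by move: hij; rewrite e ltnn.
Qed.

Lemma TAn_mem a b : a != b -> tperm a b * tau \in TAn n.
Proof.
move=> ab; rewrite inE.
have [lt|lt|eq] := ltngtP a b; last by move: ab; rewrite (val_inj eq) eqxx.
- apply/existsP; exists one; apply/existsP; exists two; apply/existsP; exists a;
  apply/existsP; exists b; by rewrite h1 h2 lt /Defs.pcomp /tau !eqxx.
- apply/existsP; exists one; apply/existsP; exists two; apply/existsP; exists b;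
  apply/existsP; exists a; by rewrite h1 h2 lt /Defs.pcomp /tau tpermC !eqxx.
Qed.

Lemma word_cons (t : {perm 'I_n}) w : word_prod (t :: w) = word_prod w * t.
Proof. by []. Qed.

Lemma tauK : tau * tau = 1.
Proof. exact: tperm2. Qed.

Lemma lower (w : seq {perm 'I_n}) : all (fun t => t \in TAn n) w ->
  if odd (size w) then (n <= cc (word_prod w * tau) + size w)%N
  else (n <= cc (word_prod w) + size w)%N.
Proof.
elim: w => [|t w IH] /=; first by move=> _; rewrite cc1 addn0.
case/andP => /TAn_inv [a [b [ab ->]]] /IH {}IH.
rewrite /Defs.pcomp; case: (odd (size w)) IH => /= IH.
- have -> : word_prod w * (tperm a b * tau) =
     (word_prod w * tau) * tperm (tau a) (tau b).
    by rewrite -tpermJ /conjg -!mulgA tpermV /tau tpermKg.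
  rewrite addnS -addSn; apply: leq_trans IH _; rewrite leq_add2r; exact: cc_tr_ge.
- rewrite -!mulgA /tau tperm2 mulg1.
  rewrite addnS -addSn; apply: leq_trans IH _; rewrite leq_add2r; exact: cc_tr_ge.
Qed.

Lemma upper m x : trp m x -> exists w, [/\ size w = m, all (fun t => t \in TAn n) w &
   word_prod w = if odd m then x * tau else x].
Proof.
elim => [|{}m y a b ab _ [w [hs ha hp]]]; first by exists [::].
case ho : (odd m) hp => hp /=; rewrite ho /=.
- exists ((tperm (tau a) (tau b) * tau) :: w); split => /=; first by rewrite hs.
    rewrite TAn_mem ?ha //; apply: contra ab => /eqP e; apply/eqP.
    exact: (perm_inj e).
  by rewrite /Defs.pcomp hp -tpermJ /conjg tpermV /tau -!mulgA tpermKg tperm2 mulg1.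
- exists ((tperm a b * tau) :: w); split => /=; first by rewrite hs.
    by rewrite TAn_mem ?ha.
  by rewrite /Defs.pcomp hp mulgA.
Qed.

End S.

Theorem corollary6p2 (n : nat) (hn : (2 <= n)%N) (one two : 'I_n)
    (h1 : val one = 0%N) (h2 : val two = 1%N)
    (v : {perm 'I_n}) (hv : v \in ('Alt_('I_n))%g) :
  two \in porbit v one <-> (exists k : nat, T_length_is v k /\ odd k).
Proof.
have ot := one_two h1 h2.
have hpar : odd n = odd (cc v).
  move: hv; rewrite Alt_even /odd_perm card_ord /cc.
  by case: (odd n); case: (odd #|porbits v|).
have ccvt : cc (v * tperm one two) = cc (tperm one two * v^-1) by rewrite cc_r.
have hle := cc_le (v * tperm one two); have hle2 := cc_le v.
case: (boolP (two \in porbit v one)) => hin.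
- have e : cc (v * tperm one two) = (cc v).+1.
    rewrite ccvt cc_tl_in // ?ccV // porbitV porbit_sym //.
  split => // _.
  have [w [hs ha hp]] := upper h1 h2 (trp_exists (erefl (n - cc (v * tperm one two))%N)).
  have od : odd (n - cc (v * tperm one two)) by rewrite e; move: hpar hle; rewrite e; lia.
  exists (n - cc (v * tperm one two))%N; split => //; split.
    by exists w; split => //; rewrite hp od -mulgA tperm2 mulg1.
  move=> m [w' [hs' ha' hp']].
  have := lower h1 h2 ha'; rewrite hs' hp'.
  case: (odd m) => ?; lia.
- have e : (cc (v * tperm one two)).+1 = cc v.
    by rewrite ccvt cc_tl_out // ?ccV // porbitV porbit_sym.
  split => // -[k [[[w' [hs' ha' hp']] hmin] ok]].
  have [w [hs ha hp]] := upper h1 h2 (trp_exists (erefl (n - cc v)%N)).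
  have ev : ~~ odd (n - cc v) by move: hpar hle2; lia.
  rewrite (negbTE ev) in hp.
  have hk := hmin (n - cc v)%N (ex_intro _ w (And3 hs ha hp)).
  have := lower h1 h2 ha'; rewrite hs' hp' ok => ?; lia.
Qed.
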